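(* Let $\mathbb F_q$ be a finite field with $q$ elements, let $n\ge 2$, let $a_1,\dots,a_n\in\mathbb F_q^*$, let $m_1,\dots,m_n$ be positive integers and put $d_j=\gcd(m_j,q-1)$ for $j=1,\dots,n$. If $d_1,\dots,d_n$ are pairwise coprime, then the number of $(x_1,\dots,x_n)\in\mathbb F_q^n$ with $x_1\cdots x_n\ne 0$ satisfying $$a_1x_1^{d_1}+\dots+a_nx_n^{d_n}=0$$ equals $$\frac{(q-1)^n+(-1)^n(q-1)}{q}.$$
   Context: $\mathbb F_q^*=\mathbb F_q\setminus\{0\}$. *)

(* Defs.v *)
From HB Require Import structures.
From mathcomp Require Import all_boot all_order all_algebra all_field.
Set Implicit Arguments. Unset Strict Implicit. Unset Printing Implicit Defensive.

(* Main.v *)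
Require Import Defs.
From HB Require Import structures.
From mathcomp Require Import all_boot all_order all_algebra all_field.
From mathcomp Require Import cyclic ring.
Import GRing.Theory Num.Theory.
Set Implicit Arguments. Unset Strict Implicit. Unset Printing Implicit Defensive.

Lemma cnt_mod e r d : (r < e)%N ->
  (\sum_(0 <= j < d * e) (j %% e == r) = d)%N.
Proof.
move=> lt_re; elim: d => [|d IH]; first by rewrite mul0n big_geq.
rewrite mulSnr (@big_cat_nat _ _ _ (d * e)) ?leq_addr //= IH.
rewrite -{1}(add0n (d * e)) big_addn.
rewrite addKn big_mkord.
rewrite (eq_bigr (fun j : 'I_e => (j == Ordinal lt_re : nat))); last first.
  by move=> j _; rewrite addnC modnMDl modn_small.
rewrite -big_mkcond /= big_pred1_eq; first by rewrite addn1.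
Qed.

Lemma prod_dvd (I : finType) (d : I -> nat) k :
  (forall i j, i != j -> coprime (d i) (d j)) -> (forall i, d i %| k) ->
  (\prod_i d i %| k)%N.
Proof.
move=> cop dv.
have cp a r : a \notin r -> coprime (d a) (\prod_(i <- r) d i).
  elim: r => [|b r IH]; first by rewrite big_nil coprimen1.
  rewrite in_cons negb_or => /andP[ab ar]; rewrite big_cons coprimeMr IH //.
  by rewrite cop.
have H r : uniq r -> (\prod_(i <- r) d i %| k)%N.
  elim: r => [|a r IH]; first by rewrite big_nil dvd1n.
  move=> /= /andP[ar ur]; rewrite big_cons Gauss_dvd ?cp // dv (IH ur).
by [].
apply: H; exact: index_enum_uniq.
Qed.

Lemma card_fam (aT rT : finType) (P : aT -> pred rT) :
  #|[set x : {ffun aT -> rT} | [forall i, P i (x i)]]| = (\prod_i #|P i|)%N.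
Proof.
have -> : #|[set x : {ffun aT -> rT} | [forall i, P i (x i)]]| = #|family P|.
  apply: eq_card => x; rewrite inE; apply/forallP/familyP => H i; exact: H.
by rewrite card_family foldrE big_map big_enum.
Qed.

Lemma card_pair (I J : finType) (P : I -> J -> bool) :
  #|[set p : I * J | P p.1 p.2]| = (\sum_i #|[set j | P i j]|)%N.
Proof.
rewrite -sum1_card; symmetry.
transitivity (\sum_(i : I) \sum_(j : J) (if P i j then 1 else 0))%N.
  apply: eq_bigr => i _; rewrite -sum1_card big_mkcond /=.
  by apply: eq_bigr => j _; rewrite inE.
rewrite pair_big [X in _ = X]big_mkcond /=.
by apply: eq_bigr => p _; rewrite inE.
Qed.

Section FF.
Variable F : finFieldType.
Local Notation Q := #|F|.-1.
Local Open Scope ring_scope.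

Lemma Q_gt0 : (0 < Q)%N.
Proof. by rewrite -(cardC1 (0:F)); apply/card_gt0P; exists 1; rewrite !inE oner_neq0. Qed.

Lemma cardF : #|F| = Q.+1.
Proof. by rewrite prednK //; apply/card_gt0P; exists 0. Qed.

Lemma unit_pow (x : F) : x != 0 -> x ^+ Q = 1.
Proof. by move=> nz; apply: (mulfI nz); rewrite -exprS -cardF expf_card mulr1. Qed.

Lemma prim_ex : exists g : F, Q.-primitive_root g.
Proof.
have : has Q.-primitive_root (enum (predC1 (0:F))).
  apply: has_prim_root; first exact: Q_gt0.
  - by apply/allP => x; rewrite mem_enum inE => nz; rewrite unity_rootE unit_pow.
  - exact: enum_uniq.
  - by rewrite -cardE cardC1.
by case/hasP => g _ pg; exists g.
Qed.

Section Gen.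
Variable g : F.
Hypothesis pg : Q.-primitive_root g.

Lemma g_nz k : g ^+ k != 0.
Proof. by rewrite expf_neq0 // (prim_root_eq0 pg) -lt0n Q_gt0. Qed.

Lemma expg_inj : injective (fun k : 'I_Q => g ^+ k).
Proof.
move=> i j /eqP; rewrite (eq_prim_root_expr pg) !modn_small // => /eqP E.
exact: val_inj.
Qed.

Lemma nz_img : [set g ^+ (val k) | k : 'I_Q] = [set x : F | x != 0].
Proof.
apply/setP => x; rewrite inE; apply/imsetP/idP => [[k _ ->]|nz].
  exact: g_nz.
by have [k ->] := prim_rootP pg (unit_pow nz); exists k.
Qed.

Lemma sum_nz (f : F -> nat) : (\sum_(x : F | x != 0%R) f x = \sum_(k < Q) f (g ^+ k))%N.
Proof.
transitivity (\sum_(x in [set g ^+ (val k) | k : 'I_Q]) f x)%N.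
  by apply: eq_bigl => x; rewrite nz_img inE.
rewrite big_imset /=; last by move=> i j _ _; apply: expg_inj.
by apply: eq_bigl => k; rewrite inE.
Qed.

Lemma cnt_pow d k : (0 < d)%N -> (d %| Q)%N ->
  #|[set u : F | u ^+ d == g ^+ k]| = if (d %| k)%N then d else 0%N.
Proof.
move=> d0 dQ.
have -> : #|[set u : F | u ^+ d == g ^+ k]| = (\sum_(u : F | u != 0%R) (u ^+ d == g ^+ k))%N.
  rewrite -sum1_card big_mkcond [RHS]big_mkcond; apply: eq_bigr => u _; rewrite inE.
  case: (eqVneq u 0) => [->|nz] /=; last by case: (_ == _).
  by rewrite expr0n gtn_eqF //= eq_sym (negbTE (g_nz k)).
rewrite sum_nz.
under eq_bigr => j _ do rewrite -exprM (eq_prim_root_expr pg).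
move: (divnK dQ); set e := (Q %/ d)%N => Qe.
have e0 : (0 < e)%N by move: Q_gt0; rewrite -Qe muln_gt0 => /andP[].
rewrite -(big_mkord xpredT (fun j => (j * d == k %[mod Q]) : nat)).
rewrite -Qe.
case: ifP => dk.
  have [c ->] : exists c, k = (c * d)%N by exists (k %/ d)%N; rewrite divnK.
  under eq_bigr => j _ do rewrite -!muln_modl eqn_pmul2r //.
  by rewrite mulnC; apply: cnt_mod; rewrite ltn_pmod.
rewrite big1 // => j _; case: eqP => // H; exfalso.
have : ((j * d) %% d = k %% d)%N.
  rewrite -(@modn_dvdm (e * d) (j * d) d) ?dvdn_mull // H.
  by rewrite modn_dvdm ?dvdn_mull.
rewrite modnMl => /esym/eqP H2.
by move: dk; rewrite /dvdn H2.
Qed.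

Section Ker.
Variables (n : nat) (d : 'I_n -> nat).
Hypothesis d_gt0 : forall i, (0 < d i)%N.
Hypothesis dQ : forall i, (d i %| Q)%N.
Hypothesis dcop : forall i j, i != j -> coprime (d i) (d j).
Local Notation T := {ffun 'I_n -> F}.

Definition Ker := [set p : F * T | (p.1 != 0) && [forall i, p.2 i ^+ d i == p.1]].

Lemma card_Ker : #|Ker| = Q.
Proof.
rewrite /Ker (card_pair (fun t (x : T) => (t != 0) && [forall i, x i ^+ d i == t])).
rewrite (bigID (fun t => t != 0)) /= [X in (_ + X)%N]big1 ?addn0; last first.
  move=> t /negPn/eqP ->; rewrite (eq_card (B := pred0)) ?card0 // => x.
  by rewrite !inE eqxx.
rewrite sum_nz.
set D := (\prod_i d i)%N.
have D0 : (0 < D)%N by rewrite prodn_gt0.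
have DQ : (D %| Q)%N by apply: prod_dvd.
transitivity (\sum_(k < Q) ((D %| k)%N : nat) * D)%N.
  apply: eq_bigr => k _.
  rewrite (eq_card (B := [set x : T | [forall i, x i ^+ d i == g ^+ k]])); last first.
    by move=> x; rewrite !inE g_nz.
  rewrite (card_fam (fun i u => u ^+ d i == g ^+ k)).
  rewrite (eq_bigr (fun i => if d i %| k then d i else 0)%N); last first.
    by move=> i _; rewrite -cnt_pow //; apply: eq_card => u; rewrite inE.
  case: (boolP [forall i, (d i %| k)%N]) => H.
    rewrite prod_dvd //; last by move=> i; exact: (forallP H i).
    by rewrite mul1n; apply: eq_bigr => i _; rewrite (forallP H i).
  move/forallPn: H => [i Hi].
  rewrite (bigD1 i) //= (negbTE Hi) mul0n.
  case: (boolP (D %| k)%N) => // DK; case/negP: Hi.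
  by apply: dvdn_trans DK; rewrite /D (bigD1 i) //= dvdn_mulr.
rewrite -big_distrl /= -(big_mkord xpredT (fun j => ((D %| j)%N : nat))).
move: (divnK DQ) => QD; rewrite -{1}QD.
rewrite (eq_bigr (fun j => ((j %% D == 0)%N : nat))) //.
by rewrite cnt_mod.
Qed.

Definition Fib (y : T) :=
  [set p : F * T | (p.1 != 0) && [forall i, p.2 i ^+ d i == p.1 * y i]].
Definition nz (y : T) := [forall i, y i != 0].

Lemma Fib_nz (y : T) (p : F * T) (i : 'I_n) : y i != 0 -> p \in Fib y -> p.2 i != 0.
Proof.
move=> yi; rewrite inE => /andP[t0 /forallP H].
apply: contraTneq (H i) => ->.
by rewrite expr0n gtn_eqF //= eq_sym mulf_neq0.
Qed.

Lemma Fib_le y : nz y -> (#|Fib y| <= Q)%N.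
Proof.
move=> /forallP ny; case: (set_0Vmem (Fib y)) => [->|[p0 Hp0]].
  by rewrite cards0.
have x0nz i : p0.2 i != 0 by apply: (Fib_nz (ny i)).
move: Hp0; rewrite inE => /andP[t0nz /forallP H0].
pose h (p : F * T) := (p.1 / p0.1, [ffun i => p.2 i / p0.2 i]).
rewrite -(card_in_imset (f := h)); last first.
  move=> [t x] [t' x'] _ _ [E1 /ffunP E2] /=.
  congr pair; first exact: (mulIf (invr_neq0 t0nz)).
  apply/ffunP => i; move: (E2 i); rewrite !ffunE.
  exact: (mulIf (invr_neq0 (x0nz i))).
rewrite -card_Ker; apply: subset_leq_card; apply/subsetP => _ /imsetP[p Hp ->].
move: Hp; rewrite !inE => /andP[tnz /forallP Hx].
rewrite /= mulf_neq0 ?invr_neq0 //=.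
apply/forallP => i; rewrite ffunE expr_div_n (eqP (Hx i)) (eqP (H0 i)).
by rewrite invfM mulrACA divff ?mulr1 ?ny.
Qed.

Lemma Fib_sum (W : pred T) :
  #|[set p : F * T | (p.1 != 0) && nz p.2 && W [ffun i => p.2 i ^+ d i / p.1]]|
  = (\sum_(y | nz y && W y) #|Fib y|)%N.
Proof.
rewrite -sum1_card (partition_big (fun p : F * T => [ffun i => p.2 i ^+ d i / p.1])
   (fun y => nz y && W y)) /=; last first.
  move=> p; rewrite inE => /andP[/andP[tnz /forallP nx] ->]; rewrite andbT.
  by apply/forallP => i; rewrite ffunE mulf_neq0 ?invr_neq0 ?expf_neq0 ?nx.
apply: eq_bigr => y /andP[ny Wy]; rewrite -sum1_card; apply: eq_bigl => p.
rewrite !inE; apply/idP/idP.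
  move=> /andP[/andP[/andP[tnz nx] Wf] /eqP E]; rewrite tnz /=.
  apply/forallP => i; move/ffunP: E => /(_ i); rewrite ffunE => <-.
  by rewrite mulrC divfK.
move=> Hp; have Hp' : p \in Fib y by rewrite inE.
move: Hp => /andP[tnz /forallP H].
have E : [ffun i => p.2 i ^+ d i / p.1] = y.
  by apply/ffunP => i; rewrite ffunE (eqP (H i)) [p.1 * _]mulrC mulfK.
rewrite E eqxx Wy tnz !andbT /= /nz.
by apply/forallP => i; apply: (Fib_nz (forallP ny i) Hp').
Qed.

Lemma card_nz : #|[set y : T | nz y]| = (Q ^ n)%N.
Proof.
rewrite (card_fam (fun _ u => u != 0)).
rewrite (eq_bigr (fun _ => Q)); last by move=> i _; rewrite cardC1.
by rewrite prod_nat_const card_ord.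
Qed.

Lemma Fib_eq y : nz y -> #|Fib y| = Q.
Proof.
move: (Fib_sum predT).
have -> : [set p : F * T | (p.1 != 0) && nz p.2 && predT [ffun i => p.2 i ^+ d i / p.1]]
   = setX [set t : F | t != 0] [set x : T | nz x].
  by apply/setP => p; rewrite !inE andbT.
rewrite cardsX card_nz.
have -> : #|[set t : F | t != 0]| = Q by rewrite -(cardC1 (0 : F)); apply: eq_card => t; rewrite !inE.
move=> S.
have H : (\sum_(y | nz y && predT y) (Q - #|Fib y|) + \sum_(y | nz y && predT y) #|Fib y|
   = \sum_(y | nz y && predT y) Q)%N.
  rewrite -big_split; apply: eq_bigr => z /andP[nz' _] /=.
  by rewrite subnK // Fib_le.
move: H; rewrite -S.
have -> : (\sum_(y | nz y && predT y) Q = #|[set y : T | nz y]| * Q)%N.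
  rewrite -sum_nat_const; apply: eq_bigl => z; by rewrite inE andbT.
rewrite card_nz [(Q ^ n * Q)%N]mulnC -{2}(add0n (Q * Q ^ n)%N) => /addIn /eqP.
rewrite sum_nat_eq0 => /forallP H ny.
move: (H y); rewrite ny /= subn_eq0 => H2.
by apply/eqP; rewrite eqn_leq H2 Fib_le.
Qed.

Lemma main_eq (a : 'I_n -> F) :
  #|[set x : T | nz x && (\sum_i a i * x i ^+ d i == 0)]| =
  #|[set y : T | nz y && (\sum_i a i * y i == 0)]|.
Proof.
move: (Fib_sum (fun y => \sum_i a i * y i == 0)).
have -> : [set p : F * T | (p.1 != 0) && nz p.2 &&
     (fun y : T => \sum_i a i * y i == 0) [ffun i => p.2 i ^+ d i / p.1]]
   = setX [set t : F | t != 0] [set x : T | nz x && (\sum_i a i * x i ^+ d i == 0)].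
  apply/setP => p; rewrite !inE; case: (eqVneq p.1 0) => //= tnz.
  congr andb.
  under eq_bigr => i _ do rewrite ffunE mulrA.
  by rewrite -big_distrl /= mulf_eq0 invr_eq0 (negbTE tnz) orbF.
rewrite cardsX.
have -> : #|[set t : F | t != 0]| = Q by rewrite -(cardC1 (0 : F)); apply: eq_card => t; rewrite !inE.
rewrite (eq_bigr (fun _ => Q)); last by move=> y /andP[ny _]; rewrite Fib_eq.
rewrite sum_nat_const.
have -> : #|[pred y : T | nz y && (\sum_i a i * y i == 0)]| =
   #|[set y : T | nz y && (\sum_i a i * y i == 0)]| by apply: eq_card => y; rewrite inE.
by rewrite mulnC => /eqP; rewrite eqn_pmul2r ?Q_gt0 // => /eqP.
Qed.

End Ker.
End Gen.

Section Rec.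
Variable n : nat.
Local Notation T := {ffun 'I_n -> F}.
Local Notation T1 := {ffun 'I_n.+1 -> F}.

Definition joinf (p : T * F) : T1 :=
  [ffun i => if unlift ord_max i is Some j then p.1 j else p.2].
Definition splitf (y : T1) : T * F :=
  ([ffun j => y (widen_ord (leqnSn n) j)], y ord_max).

Lemma widen_lift (j : 'I_n) : widen_ord (leqnSn n) j = lift ord_max j.
Proof. by apply: val_inj; rewrite /= /bump leqNgt ltn_ord. Qed.

Lemma joinK : cancel joinf splitf.
Proof.
move=> [x u]; rewrite /splitf /joinf !ffunE unlift_none; congr pair.
by apply/ffunP => j; rewrite !ffunE widen_lift liftK.
Qed.

Lemma splitK : cancel splitf joinf.
Proof.
move=> y; apply/ffunP => i; rewrite ffunE.
by case: unliftP => [j ->|->] //=; rewrite ffunE widen_lift.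
Qed.

Lemma nz_join p : nz (joinf p) = nz p.1 && (p.2 != 0).
Proof.
apply/forallP/andP => [H|[/forallP H1 H2] i].
  split; last by move: (H ord_max); rewrite ffunE unlift_none.
  by apply/forallP => j; move: (H (lift ord_max j)); rewrite ffunE liftK.
by rewrite ffunE; case: unliftP => [j _|_].
Qed.

Lemma sum_join (a : 'I_n.+1 -> F) p :
  \sum_i a i * joinf p i =
  \sum_i a (widen_ord (leqnSn n) i) * p.1 i + a ord_max * p.2.
Proof.
rewrite big_ord_recr /= ffunE unlift_none; congr (_ + _).
by apply: eq_bigr => i _; rewrite ffunE widen_lift liftK.
Qed.

Lemma count_rec (a : 'I_n.+1 -> F) : (forall i, a i != 0) ->
  (#|[set y : T1 | nz y && (\sum_i a i * y i == 0)%R]| +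
   #|[set x : T | nz x && (\sum_i a (widen_ord (leqnSn n) i) * x i == 0)%R]|
   = Q ^ n)%N.
Proof.
move=> anz.
set s := fun x : T => \sum_i a (widen_ord (leqnSn n) i) * x i.
have -> : #|[set y : T1 | nz y && (\sum_i a i * y i == 0)]| =
    #|[set p : T * F | nz p.1 && (p.2 != 0) && (s p.1 + a ord_max * p.2 == 0)]|.
  have -> : [set y : T1 | nz y && (\sum_i a i * y i == 0)] =
      joinf @: [set p : T * F | nz p.1 && (p.2 != 0) && (s p.1 + a ord_max * p.2 == 0)].
    apply/setP => y; rewrite inE; apply/idP/imsetP => [Hy|[p Hp ->]].
      exists (splitf y); last by rewrite splitK.
      by rewrite inE -nz_join -sum_join splitK.
    by move: Hp; rewrite inE -nz_join -sum_join.
  by rewrite card_imset //; apply: (can_inj joinK).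
rewrite (card_pair (fun x u => nz x && (u != 0) && (s x + a ord_max * u == 0))).
have E x : #|[set u | nz x && (u != 0) && (s x + a ord_max * u == 0)]| =
    (nz x && (s x != 0) : nat).
  case: (boolP (nz x)) => nx /=; last first.
    by apply/eqP; rewrite cards_eq0; apply/eqP/setP => u; rewrite !inE.
  case: (eqVneq (s x) 0) => [->|sx] /=.
    apply/eqP; rewrite cards_eq0; apply/eqP/setP => u; rewrite !inE add0r.
    by rewrite mulf_eq0 (negbTE (anz _)) /= andNb.
  rewrite -(card1 (- s x / a ord_max)); apply: eq_card => u; rewrite !inE.
  apply/idP/idP => [/andP[_ /eqP H]|/eqP ->].
    apply/eqP; apply: (mulfI (anz ord_max)).
    by rewrite [RHS]mulrC divfK // -(addKr (s x) (a ord_max * u)) H addr0.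
  rewrite mulf_neq0 ?oppr_eq0 ?invr_neq0 //=.
  by rewrite mulrC divfK // addrN.
rewrite (eq_bigr _ (fun x _ => E x)).
have -> : #|[set x : T | nz x && (s x == 0)]| = (\sum_x (nz x && (s x == 0)%R : nat))%N.
  by rewrite -sum1_card big_mkcond; apply: eq_bigr => x _; rewrite inE; case: (_ && _).
rewrite -big_split /= -(card_nz n) -sum1_card [RHS]big_mkcond /=.
apply: eq_bigr => x _; rewrite inE.
by case: (nz x); case: (s x == 0).
Qed.
End Rec.

Lemma count1 n (a : 'I_n -> F) : (forall i, a i != 0) ->
  (#|[set y : {ffun 'I_n -> F} | nz y && (\sum_i a i * y i == 0)]|%:R : rat)
  = ((Q%:R) ^+ n + (-1) ^+ n * Q%:R) / (Q%:R + 1).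
Proof.
have Q1 : (Q%:R + 1 : rat) != 0 by rewrite natr1 pnatr_eq0.
elim: n a => [|n IH] a anz.
  have -> : [set y : {ffun 'I_0 -> F} | nz y && (\sum_i a i * y i == 0)] = setT.
    by apply/setP => y; rewrite !inE big_ord0 eqxx andbT; apply/forallP => -[].
  by rewrite cardsT card_ffun card_ord expn0 !expr0 mul1r addrC divff.
have H := count_rec anz.
have := IH (fun i => a (widen_ord (leqnSn n) i)) (fun i => anz _).
move: H; set c1 := #|_|; set c0 := #|_| => H E.
have -> : (c1%:R : rat) = (Q ^ n)%:R - c0%:R by rewrite -H natrD addrK.
rewrite E natrX; set q := (Q%:R : rat).
apply: (mulIf Q1); rewrite divfK // mulrBl divfK // !exprS.
ring.
Qed.
End FF.

Local Open Scope ring_scope.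

Theorem corollary1 (F : finFieldType) (n : nat) (a : 'I_n -> F)
    (m : 'I_n -> nat) :
  (2 <= n)%N ->
  (forall i, a i != 0) ->
  (forall i, (0 < m i)%N) ->
  (forall i j, i != j ->
     coprime (gcdn (m i) (#|F| - 1)) (gcdn (m j) (#|F| - 1))) ->
  (#|[set x : {ffun 'I_n -> F} |
       [forall i, x i != 0] &&
       (\sum_(i < n) a i * x i ^+ (gcdn (m i) (#|F| - 1)) == 0)]|%:R : rat)
  = ((#|F|%:R - 1) ^+ n + (-1) ^+ n * (#|F|%:R - 1)) / #|F|%:R.
Proof.
move=> _ anz _ cop.
have [g pg] := prim_ex F.
have dgt0 i : (0 < gcdn (m i) (#|F| - 1))%N by rewrite gcdn_gt0 subn1 Q_gt0 orbT.
have dQ i : (gcdn (m i) (#|F| - 1) %| #|F|.-1)%N by rewrite -subn1 dvdn_gcdr.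
have E := @main_eq F g pg n (fun i => gcdn (m i) (#|F| - 1)) dgt0 dQ cop a.
rewrite /nz /= in E.
have C := count1 anz; rewrite /nz in C.
by rewrite E C cardF -natr1 addrK.
Qed.
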